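(* $D(18,\{3,4\})\ge 30$; equivalently, every $\{K_3,K_4\}$-decomposition of $K_{18}$ has $\alpha\ge 9$.
   Context: A $\{K_3,K_4\}$-decomposition of $K_v$ is a collection of subgraphs, each isomorphic to $K_3$ or $K_4$, such that every edge of $K_v$ lies in exactly one of them. $\alpha$ and $\beta$ denote the numbers of copies of $K_3$ and $K_4$ in the decomposition (so $3\alpha+6\beta=\binom{v}{2}$). $D(v,\{3,4\})$ is the minimum of $\alpha+\beta$ over all such decompositions of $K_v$. *)

(* Defs.v *)
From mathcomp Require Import all_boot.
Set Implicit Arguments. Unset Strict Implicit. Unset Printing Implicit Defensive.

(* A subgraph of K_v isomorphic to K_3 or K_4 is a
   complete subgraph, hence determined by its vertex set (of size 3 or 4).  Since every block contains
   an edge, no block can be repeated, so a set of blocks suffices. *)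
Definition K34_decomposition (v : nat) (B : {set {set 'I_v}}) : Prop :=
  (forall b, b \in B -> #|b| = 3 \/ #|b| = 4) /\
  (forall x y : 'I_v, x != y ->
     exists! b, b \in B /\ x \in b /\ y \in b).

Definition alpha (v : nat) (B : {set {set 'I_v}}) : nat :=
  #|[set b in B | #|b| == 3]|.
Definition beta (v : nat) (B : {set {set 'I_v}}) : nat :=
  #|[set b in B | #|b| == 4]|.

Definition D34_ge (v m : nat) : Prop :=
  forall B : {set {set 'I_v}}, K34_decomposition B -> m <= alpha B + beta B.

(* Main.v *)
Require Import Defs.
From mathcomp Require Import all_boot.
From mathcomp Require Import zify.
Set Implicit Arguments. Unset Strict Implicit. Unset Printing Implicit Defensive.

Section Gen.
End Gen.

Lemma card_sum (T : finType) (X b : {set T}) :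
  #|b :&: X| = \sum_(x in X) (x \in b).
Proof.
rewrite -sum1_card [LHS]big_mkcond [RHS]big_mkcond; apply: eq_bigr => x _.
by rewrite inE; case: (x \in b); case: (x \in X).
Qed.

Lemma L3 v (P : pred {set 'I_v}) (X : {set 'I_v}) (F : {set 'I_v} -> nat) :
  \sum_(b | P b) #|b :&: X| * F b = \sum_(x in X) \sum_(b | P b && (x \in b)) F b.
Proof.
under [RHS]eq_bigr do rewrite big_mkcondr.
rewrite exchange_big /=; apply: eq_bigr => b _.
rewrite card_sum big_distrl /=; apply: eq_bigr => x _.
by case: (x \in b); rewrite ?mul1n ?mul0n.
Qed.

Lemma pair1 v (B : {set {set 'I_v}}) : K34_decomposition B ->
  forall x y : 'I_v, x != y ->
  \sum_(b | (b \in B) && (x \in b) && (y \in b)) 1 = 1.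
Proof.
case=> _ H x y xy; have [b0 [[b0B [xb0 yb0]] U]] := H x y xy.
rewrite (bigD1 b0) /=; last by rewrite b0B xb0 yb0.
rewrite big1 // => b /andP[/andP[/andP[bB xb] yb] bb0].
by move: bb0; rewrite (U b (conj bB (conj xb yb))) eqxx.
Qed.

Lemma L2 v (B : {set {set 'I_v}}) : K34_decomposition B ->
  forall (x y : 'I_v) b1 b2, x != y -> b1 \in B -> b2 \in B ->
  x \in b1 -> y \in b1 -> x \in b2 -> y \in b2 -> b1 = b2.
Proof.
case=> _ H x y b1 b2 xy B1 B2 x1 y1 x2 y2.
have [b0 [_ U]] := H x y xy.
by rewrite -(U b1) ?(U b2).
Qed.

Definition deg v (B : {set {set 'I_v}}) (x : 'I_v) :=
  \sum_(b | (b \in B) && (x \in b)) 1.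

Lemma L1 v (B : {set {set 'I_v}}) : K34_decomposition B ->
  forall (x : 'I_v) (U : {set 'I_v}),
  \sum_(b | (b \in B) && (x \in b)) #|b :&: U| = #|U :\ x| + (x \in U) * deg B x.
Proof.
move=> HB x U.
have := L3 (fun b => (b \in B) && (x \in b)) U (fun _ => 1).
under eq_bigr do rewrite muln1.
move=> ->.
have E : forall y, y \in U -> y != x ->
   \sum_(b | (b \in B) && (x \in b) && (y \in b)) 1 = 1.
  by move=> y _ yx; apply: pair1; rewrite // eq_sym.
case xU: (x \in U).
  rewrite (bigD1 x) //= mul1n addnC.
  congr (_ + _).
    rewrite -sum1_card; apply: eq_big.
      by move=> y; rewrite !inE andbC.
    by move=> y /andP[yU yx]; apply: E.
  by rewrite /deg; under eq_bigl do rewrite -andbA andbb.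
change (false * deg B x) with 0.
rewrite addn0 setDE.
rewrite -sum1_card; apply: eq_big.
  move=> y; rewrite !inE; case: eqP => [->|]; by rewrite ?xU ?andbT.
by move=> y yU; apply: E => //; apply/eqP => yx; rewrite -yx yU in xU.
Qed.

Lemma sum_ge1 (I : finType) (P : pred I) (F : I -> nat) j :
  P j -> 1 <= F j -> 1 <= \sum_(i | P i) F i.
Proof. by move=> Pj Fj; rewrite (bigD1 j) //=; apply: leq_trans (leq_addr _ _). Qed.

Lemma sum_two (I : finType) (P : pred I) (F : I -> nat) j1 j2 :
  P j1 -> P j2 -> j1 != j2 -> 1 <= F j1 -> 1 <= F j2 -> 2 <= \sum_(i | P i) F i.
Proof.
move=> P1 P2 ne F1 F2; rewrite (bigD1 j1) //= (bigD1 j2) /=; last by rewrite P2 eq_sym.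
by apply: leq_trans (leq_add F1 (leq_addr _ _)).
Qed.

Lemma sum_pos_ex (I : finType) (P : pred I) (F : I -> nat) :
  0 < \sum_(i | P i) F i -> exists j, P j /\ 0 < F j.
Proof.
case: (pickP (fun j => P j && (0 < F j))) => [j /andP[]|H]; first by exists j.
rewrite big1 // => i Pi; move: (H i); rewrite Pi /=; by case: (F i).
Qed.

Lemma even_sum (I : finType) (P : pred I) (F : I -> nat) :
  (forall i, P i -> ~~ odd (F i)) -> ~~ odd (\sum_(i | P i) F i).
Proof.
move=> H; apply: (big_ind (fun n => ~~ odd n)) => //.
by move=> m n Hm Hn; rewrite oddD; move: Hm Hn; case: (odd m); case: (odd n).
Qed.

Lemma card_sel v (B : {set {set 'I_v}}) (Q : pred {set 'I_v}) :
  #|[set b in B | Q b]| = \sum_(b | b \in B) Q b.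
Proof.
rewrite -sum1_card [LHS]big_mkcond [RHS]big_mkcond; apply: eq_bigr => b _.
by rewrite inE; case: (b \in B); case: (Q b).
Qed.

Definition tc v (B : {set {set 'I_v}}) (x : 'I_v) :=
  \sum_(b | (b \in B) && (x \in b)) (#|b| == 3).
Definition kc v (B : {set {set 'I_v}}) (x : 'I_v) :=
  \sum_(b | (b \in B) && (x \in b)) (#|b| == 4).

Lemma size34 v (B : {set {set 'I_v}}) : K34_decomposition B ->
  forall b, b \in B -> #|b| = 3 * (#|b| == 3) + 4 * (#|b| == 4) /\
                       1 = (#|b| == 3) + (#|b| == 4).
Proof. by case=> H _ b /H [] ->. Qed.

Lemma degE v (B : {set {set 'I_v}}) : K34_decomposition B ->
  forall x, deg B x = tc B x + kc B x.
Proof.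
move=> HB x; rewrite /deg /tc /kc -big_split /=; apply: eq_bigr => b /andP[bB _].
by case: (size34 HB bB).
Qed.

Lemma deg17 (B : {set {set 'I_18}}) : K34_decomposition B ->
  forall x, 2 * tc B x + 3 * kc B x = 17.
Proof.
move=> HB x; have := L1 HB x [set: 'I_18].
rewrite in_setT mul1n degE //.
have -> : #|[set: 'I_18] :\ x| = 17.
  by have := cardsD1 x [set: 'I_18]; rewrite in_setT cardsT card_ord add1n; case.

have -> : \sum_(b | (b \in B) && (x \in b)) #|b :&: [set: 'I_18]| =
          3 * tc B x + 4 * kc B x.
  rewrite /tc /kc !big_distrr -big_split /=; apply: eq_bigr => b /andP[bB _].
  by rewrite setIT; case: (size34 HB bB).
lia.
Qed.

Lemma sum_tc v (B : {set {set 'I_v}}) : K34_decomposition B ->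
  \sum_(x in [set: 'I_v]) tc B x = 3 * alpha B /\
  \sum_(x in [set: 'I_v]) kc B x = 4 * beta B.
Proof.
move=> HB; rewrite /alpha /beta !card_sel !big_distrr /=.
rewrite -(L3 (fun b => b \in B) [set: 'I_v] (fun b => (#|b| == 3) : nat)).
rewrite -(L3 (fun b => b \in B) [set: 'I_v] (fun b => (#|b| == 4) : nat)).
split; apply: eq_bigr => b bB; rewrite setIT; case: eqP => [->|_] //=; by rewrite !muln0.
Qed.

Lemma ab51 (B : {set {set 'I_18}}) : K34_decomposition B ->
  alpha B + 2 * beta B = 51.
Proof.
move=> HB; have [Ht Hk] := sum_tc HB.
have : \sum_(x in [set: 'I_18]) (2 * tc B x + 3 * kc B x) = 18 * 17.
  by rewrite (eq_bigr (fun _ => 17)) ?sum_nat_const ?cardsT ?card_ord // => x _; apply: deg17.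
rewrite big_split /= -!big_distrr /= Ht Hk; lia.
Qed.

Lemma tc_vals (B : {set {set 'I_18}}) : K34_decomposition B ->
  forall x, tc B x = 1 \/ tc B x = 4 \/ tc B x = 7.
Proof. move=> HB x; have := deg17 HB x; lia. Qed.

Lemma find_w (B : {set {set 'I_18}}) : K34_decomposition B -> alpha B <= 8 ->
  exists w, tc B w = 4 /\ forall x, x != w -> tc B x = 1.
Proof.
move=> HB Ha; have [Ht _] := sum_tc HB; have H51 := ab51 HB.
have Hv := tc_vals HB.
have Hge : 18 <= \sum_(x in [set: 'I_18]) tc B x.
  have S18 : \sum_(x in [set: 'I_18]) 1 = 18 by rewrite sum1_card cardsT card_ord.
  rewrite -{1}S18.
  by apply: leq_sum => x _; have := Hv x; lia.
have H21 : \sum_(x in [set: 'I_18]) tc B x = 21 by lia.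
case: (pickP (fun x => tc B x != 1)) => [w Hw|Hn]; last first.
  move: H21; rewrite (eq_bigr (fun _ => 1)) ?sum1_card ?cardsT ?card_ord // => x _.
  by move: (Hn x) => /negbFE/eqP.
move: H21; rewrite (bigD1 w) ?in_setT //=.
have E : \sum_(i | (i \in [set: 'I_18]) && (i != w)) tc B i =
         \sum_(i | (i \in [set: 'I_18]) && (i != w)) (tc B i - 1) +
         \sum_(i | (i \in [set: 'I_18]) && (i != w)) 1.
  by rewrite -big_split /=; apply: eq_bigr => i _; have := Hv i; lia.
have S17 : \sum_(i | (i \in [set: 'I_18]) && (i != w)) 1 = 17.
  rewrite sum1dep_card; transitivity #|'I_18|.-1; last by rewrite card_ord.
  rewrite -(cardC1 w); apply: eq_card => i.
  by rewrite !inE.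
rewrite E S17 => H; exists w.
have Hw4 : tc B w = 4 by move/eqP: Hw; have := Hv w; lia.
split => // x xw.
have : \sum_(i | (i \in [set: 'I_18]) && (i != w)) (tc B i - 1) == 0 by apply/eqP; lia.
rewrite sum_nat_eq0 => /forallP /(_ x); rewrite in_setT xw /= => /eqP.
have := Hv x; lia.
Qed.

Lemma five (n : nat) : n <= 4 ->
  1 = (n == 0) + (n == 1) + (n == 2) + (n == 3) + (n == 4) /\
  n = (n == 1) + 2 * (n == 2) + 3 * (n == 3) + 4 * (n == 4) /\
  n * n = (n == 1) + 4 * (n == 2) + 9 * (n == 3) + 16 * (n == 4) /\
  n * odd n = (n == 1) + 3 * (n == 3).
Proof. case: n => [|[|[|[|[|]]]]]; done. Qed.

Lemma cardsD1_in (T : finType) (x : T) (A : {set T}) : x \in A -> #|A :\ x| = #|A| - 1.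
Proof. by move=> xA; rewrite (cardsD1 x A) xA add1n subn1. Qed.
Lemma cardsD1_out (T : finType) (x : T) (A : {set T}) : x \notin A -> #|A :\ x| = #|A|.
Proof. by move=> xA; rewrite (cardsD1 x A) (negbTE xA). Qed.

Lemma sums5 (I : finType) (P : pred I) (f : I -> nat) : (forall i, P i -> f i <= 4) ->
  let N j := \sum_(i | P i) (f i == j) in
  \sum_(i | P i) 1 = N 0 + N 1 + N 2 + N 3 + N 4 /\
  \sum_(i | P i) f i = N 1 + 2 * N 2 + 3 * N 3 + 4 * N 4 /\
  \sum_(i | P i) f i * f i = N 1 + 4 * N 2 + 9 * N 3 + 16 * N 4 /\
  \sum_(i | P i) f i * odd (f i) = N 1 + 3 * N 3.
Proof.
move=> H N; rewrite /N; (repeat split); rewrite ?big_distrr -?big_split /=;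
  apply: eq_bigr => i Pi; by have [? [? [? ?]]] := five (H i Pi).
Qed.

Lemma ar_three n : 3 <= n -> n != 4 -> n <= 4 -> n = 3.
Proof. lia. Qed.
Lemma ar1 x y : 1 + x = 11 -> 1 + y = 5 -> x <= 2 * y -> False.
Proof. lia. Qed.
Lemma ar2 x : 3 + x = 4 -> 0 < x.
Proof. lia. Qed.
Lemma ar3 x y : 3 + x = 8 -> 1 + y = 4 -> 2 * y <= x -> False.
Proof. lia. Qed.

Definition Aset (B : {set {set 'I_18}}) (w : 'I_18) : {set 'I_18} :=
  [set y | (y != w) && [exists b, [&& b \in B, #|b| == 3, w \in b & y \in b]]].

Lemma no7 (B : {set {set 'I_18}}) (w : 'I_18) : K34_decomposition B ->
  tc B w = 4 -> (forall x, x != w -> tc B x = 1) -> False.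
Proof.
move=> HB Hw Hx.
have HB2 := HB.2.
have Hsz := HB.1.
have tri_uniq : forall x, x != w -> forall T1 T2, T1 \in B -> T2 \in B ->
    #|T1| = 3 -> #|T2| = 3 -> x \in T1 -> x \in T2 -> T1 = T2.
  move=> x xw T1 T2 B1 B2 s1 s2 x1 x2; apply/eqP; apply/negPn/negP => ne.
  have := sum_two (P := fun b => (b \in B) && (x \in b)) (F := fun b => (#|b| == 3) : nat)
     (j1 := T1) (j2 := T2).
  rewrite B1 B2 x1 x2 s1 s2 /= => /(_ isT isT ne isT isT).
  by rewrite -/(tc B x) Hx.
set A := Aset B w.
have inA : forall y, reflect (y != w /\ exists T, [/\ T \in B, #|T| = 3, w \in T & y \in T]) (y \in A).
  move=> y; rewrite inE; apply: (iffP andP) => [[yw /existsP[T /and4P[TB /eqP s wT yT]]]|[yw [T [TB s wT yT]]]].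
    by split => //; exists T.
  by split => //; apply/existsP; exists T; rewrite TB s eqxx wT yT.
have wA : w \notin A by apply/negP => /inA [ww _]; rewrite eqxx in ww.
have triA : forall T, T \in B -> #|T| = 3 -> w \in T -> #|T :&: A| = 2.
  move=> T TB s wT.
  have -> : T :&: A = T :\ w.
    apply/setP => y; rewrite in_setI in_setD1; case: (y =P w) => [->|/eqP yw]; first by rewrite (negbTE wA) andbF.
    case yT: (y \in T) => //=; apply/inA; split => //; by exists T.
  by have := cardsD1 w T; rewrite wT s add1n; case.
have K4wA : forall b, b \in B -> #|b| = 4 -> w \in b -> b :&: A = set0.
  move=> b bB s wb; apply/setP => y; rewrite in_setI in_set0; apply/negP => /andP[yb /inA [yw [T [TB sT wT yT]]]].
  have := L2 HB (x := w) (y := y) (b1 := b) (b2 := T); rewrite eq_sym yw bB TB wb yb wT yT.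
  by move=> /(_ isT isT isT isT isT isT isT) eb; rewrite eb sT in s.
have cardA : #|A| = 8.
  have := L1 HB w A; rewrite (negbTE wA).
  change (false * deg B w) with 0; rewrite addn0.
  have := cardsD1 w A; rewrite (negbTE wA) add0n => -> <-.
  transitivity (\sum_(b in B | w \in b) 2 * (#|b| == 3)); last by rewrite -big_distrr /= -/(tc B w) Hw.
  apply: eq_bigr => b /andP[bB wb]; case: (Hsz b bB) => s; rewrite s /=.
    by rewrite triA.
  by rewrite K4wA // cards0.
have deg6 : forall x, x != w -> deg B x = 6.
  move=> x xw; rewrite degE //; have := deg17 HB x; rewrite Hx //; lia.
set kp := fun b : {set 'I_18} => [&& b \in B, #|b| == 4 & w \notin b].
set ia := fun b : {set 'I_18} => #|b :&: A|.
have PA : forall a, a \in A ->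
   \sum_(b | kp b && (a \in b)) 1 = 5 /\ \sum_(b | kp b && (a \in b)) ia b = 11.
  move=> a aA; have /inA [aw [T [TB sT wT aT]]] := aA.
  have split : forall F : {set 'I_18} -> nat,
      \sum_(b | (b \in B) && (a \in b)) F b = F T + \sum_(b | kp b && (a \in b)) F b.
    move=> F; rewrite (bigD1 T) /=; last by rewrite TB aT.
    congr (_ + _); apply: eq_bigl => b; rewrite /kp.
    apply/idP/idP.
      case/andP=> /andP[bB ab] bT.
      have s4 : #|b| = 4.
        case: (Hsz b bB) => // s3; move: bT; by rewrite (tri_uniq a aw b T bB TB s3 sT ab aT) eqxx.
      have wb : w \notin b.
        apply/negP => wb; move: bT; by rewrite (L2 HB (x := w) (y := a) (b1 := b) (b2 := T)) ?eqxx // eq_sym.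
      by rewrite bB s4 eqxx wb ab.
    case/andP=> /and3P[bB /eqP s4 wb] ab; rewrite bB ab /=.
    by apply/eqP => bT; rewrite bT sT in s4.
  have := split (fun _ => 1); rewrite -/(deg B a) deg6 //.
  have := split ia; rewrite L1 // aA mul1n deg6 // /ia triA //.
  rewrite (cardsD1_in aA) cardA.
  move: (\sum_(b | kp b && (a \in b)) ia b) (\sum_(b | kp b && (a \in b)) 1) => s2 s1 H1 H2.
  clear -H1 H2; lia.
have PC : forall c, c != w -> c \notin A ->
   \sum_(b | kp b && (c \in b)) 1 = 4 /\ \sum_(b | kp b && (c \in b)) ia b = 8.
  move=> c cw cA.
  have [Tc /andP[/andP[TcB cTc] sTc]] : exists Tc, ((Tc \in B) && (c \in Tc)) && (#|Tc| == 3).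
    have : 0 < tc B c by rewrite Hx.
    by case/sum_pos_ex => Tc [H1 H2]; exists Tc; rewrite H1; case: (#|Tc| == 3) H2.
  move/eqP: sTc => sTc.
  have wc : w != c by rewrite eq_sym.
  have [bw [[bwB [wbw cbw]] _]] := HB2 w c wc.
  have sbw : #|bw| = 4.
    case: (Hsz bw bwB) => // s3; case/negP: cA; apply/inA; split => //; by exists bw.
  have Tcbw : Tc != bw by apply/eqP => e; rewrite e sbw in sTc.
  have iTc : ia Tc = 0.
    rewrite /ia; apply/eqP; rewrite cards_eq0; apply/eqP/setP => y.
    rewrite in_setI in_set0; apply/negP => /andP[yTc /inA [yw [Ty [TyB sTy wTy yTy]]]].
    have e := tri_uniq y yw Tc Ty TcB TyB sTc sTy yTc yTy.
    case/negP: cA; apply/inA; split => //; exists Tc; split => //; by rewrite e.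
  have ibw : ia bw = 0 by rewrite /ia K4wA // cards0.
  have split : forall F : {set 'I_18} -> nat,
      \sum_(b | (b \in B) && (c \in b)) F b = F Tc + (F bw + \sum_(b | kp b && (c \in b)) F b).
    move=> F; rewrite (bigD1 Tc) /=; last by rewrite TcB cTc.
    rewrite (bigD1 bw) /=; last by rewrite bwB cbw eq_sym Tcbw.
    congr (_ + (_ + _)); apply: eq_bigl => b; rewrite /kp.
    apply/idP/idP.
      case/andP=> /andP[/andP[bB cb] bT] bbw.
      have s4 : #|b| = 4.
        case: (Hsz b bB) => // s3; move: bT; by rewrite (tri_uniq c cw b Tc bB TcB s3 sTc cb cTc) eqxx.
      have wb : w \notin b.
        apply/negP => wb; move: bbw; by rewrite (L2 HB (x := w) (y := c) (b1 := b) (b2 := bw)) ?eqxx // eq_sym.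
      by rewrite bB s4 eqxx wb cb.
    case/andP=> /and3P[bB /eqP s4 wb] cb; rewrite bB cb /=.
    apply/andP; split; first by apply/eqP => bT; rewrite bT sTc in s4.
    by apply/eqP => e; rewrite e wbw in wb.
  have := split (fun _ => 1); rewrite -/(deg B c) deg6 //.
  have := split ia; rewrite L1 // (negbTE cA) iTc ibw.
  change (false * deg B c) with 0.
  rewrite (cardsD1_out cA) cardA.
  move: (\sum_(b | kp b && (c \in b)) ia b) (\sum_(b | kp b && (c \in b)) 1) => s2 s1 H1 H2.
  clear -H1 H2; lia.
set C := ~: (w |: A).
have inC : forall c, (c \in C) = (c != w) && (c \notin A).
  by move=> c; rewrite in_setC in_setU1 negb_or.
have cardC : #|C| = 9.
  have := cardsC (w |: A); rewrite cardsU1 wA cardA card_ord -/C; lia.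
have ib4 : forall b, kp b -> ia b <= 4.
  move=> b /and3P[_ /eqP s _]; rewrite /ia; apply: leq_trans (subset_leq_card (subsetIl b A)) _; by rewrite s.
have S1 : \sum_(b | kp b) ia b = 40.
  transitivity (\sum_(b | kp b) #|b :&: A| * 1); first by apply: eq_bigr => b _; rewrite muln1.
  rewrite L3 (eq_bigr (fun _ => 5)) => [|a aA]; last by case: (PA a aA).
  by rewrite sum_nat_const cardA.
have S2 : \sum_(b | kp b) ia b * ia b = 88.
  rewrite L3 (eq_bigr (fun _ => 11)) => [|a aA]; last by case: (PA a aA).
  by rewrite sum_nat_const cardA.
have SC : \sum_(b | kp b) #|b :&: C| = 36.
  transitivity (\sum_(b | kp b) #|b :&: C| * 1); first by apply: eq_bigr => b _; rewrite muln1.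
  rewrite L3 (eq_bigr (fun _ => 4)) => [|c]; last first.
    by rewrite inC => /andP[cw cA]; case: (PC c cw cA).
  by rewrite sum_nat_const cardC.
have S0 : 4 * \sum_(b | kp b) 1 = \sum_(b | kp b) ia b + \sum_(b | kp b) #|b :&: C|.
  rewrite big_distrr /= -big_split /=; apply: eq_bigr => b /and3P[_ /eqP s wb].
  rewrite muln1; transitivity #|b|; first by rewrite s.
  rewrite /ia -(cardsID A b); congr (_ + _); apply: eq_card => y.
  rewrite in_setI in_setD inC; case: eqP => [->|_] /=; [by rewrite (negbTE wb) andbF | by rewrite andbC].
have Sodd : 8 <= \sum_(b | kp b) ia b * odd (ia b).
  have := L3 kp A (fun b => odd (ia b)); rewrite /= => ->.
  rewrite -{1}cardA -sum1_card; apply: leq_sum => a aA.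
  case E: (\sum_(b | kp b && (a \in b)) odd (ia b)) => [|//].
  move/eqP: E; rewrite sum_nat_eq0 => /forallP H.
  have := even_sum (P := fun b => kp b && (a \in b)) (F := ia).
  case: (PA a aA) => _ ->; apply => b Pb; by have := H b; rewrite Pb /= eqb0.
have [E0 [E1 [E2 E3]]] := sums5 ib4.
have [N0 [N4 N1]] : \sum_(b | kp b) (ia b == 0) = 0 /\ \sum_(b | kp b) (ia b == 4) = 0 /\
   \sum_(b | kp b) (ia b == 1) = 1 by lia.
have [b1 [kb1 ib1]] : exists b1, kp b1 /\ ia b1 = 1.
  have : 0 < \sum_(b | kp b) (ia b == 1) by rewrite N1.
  case/sum_pos_ex => b [kb]; case: eqP => // e _; by exists b.
have uniq1 : forall b, kp b -> ia b = 1 -> b = b1.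
  move=> b kb ib; apply/eqP/negPn/negP => ne.
  have := sum_two (P := kp) (F := fun b => (ia b == 1) : nat) kb kb1 ne.
  by rewrite ib ib1 eqxx N1 => /(_ isT isT).
have no0 : forall b, kp b -> ia b != 0.
  move=> b kb; apply/negP => /eqP ib.
  have := sum_ge1 (P := kp) (F := fun b => (ia b == 0) : nat) kb.
  by rewrite ib N0 => /(_ isT).
have no4 : forall b, kp b -> ia b != 4.
  move=> b kb; apply/negP => /eqP ib.
  have := sum_ge1 (P := kp) (F := fun b => (ia b == 4) : nat) kb.
  by rewrite ib N4 => /(_ isT).
have [a0 a0b1A] : exists a0, a0 \in b1 :&: A.
  by apply/set0Pn; rewrite -card_gt0 -/(ia b1) ib1.
move: a0b1A; rewrite in_setI => /andP[a0b1 a0A].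
have [cnt5 sum11] := PA a0 a0A.
rewrite (bigD1 b1) /= in cnt5; last by rewrite kb1 a0b1.
rewrite (bigD1 b1) /= in sum11; last by rewrite kb1 a0b1.
rewrite ib1 in sum11.
have [b [kb a0b bb1 ib3]] : exists b, [/\ kp b, a0 \in b, b != b1 & ia b = 3].
  case: (pickP (fun b => [&& kp b, a0 \in b, b != b1 & 3 <= ia b])) => [b|Hn].
    case/and4P=> kb a0b bb1 i3; exists b; split => //.
    by apply: ar_three i3 (no4 b kb) (ib4 b kb).
  have : \sum_(i | kp i && (a0 \in i) && (i != b1)) ia i <=
         \sum_(i | kp i && (a0 \in i) && (i != b1)) 2 * 1.
    apply: leq_sum => b /andP[/andP[kb a0b] bb1].
    have := Hn b; rewrite kb a0b bb1 /= => /negbT; rewrite -ltnNge muln1.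
    by case: (ia b) => [|[|[|]]].
  rewrite -big_distrr /= => H; exfalso; exact: ar1 sum11 cnt5 H.
have [c cbA] : exists c, c \in b :\: A.
  apply/set0Pn; rewrite -card_gt0.
  have := cardsID A b; move: kb => /and3P[_ /eqP -> _]; rewrite -/(ia b) ib3; exact: ar2.
move: cbA; rewrite in_setD => /andP[cA cb].
have cw : c != w.
  apply/eqP => e; move: kb => /and3P[_ _]; by rewrite -e cb.
have [cnt4 sum8] := PC c cw cA.
have cb1 : c \in b1.
  apply/negPn/negP => cb1.
  rewrite (bigD1 b) /= in cnt4; last by rewrite kb cb.
  rewrite (bigD1 b) /= in sum8; last by rewrite kb cb.
  rewrite ib3 in sum8.
  have : \sum_(i | kp i && (c \in i) && (i != b)) 2 * 1 <=
         \sum_(i | kp i && (c \in i) && (i != b)) ia i.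
    apply: leq_sum => b' /andP[/andP[kb' cb'] _].
    have := no0 b' kb'; have ne1 : ia b' != 1.
      by apply/eqP => e; move: cb1; rewrite -(uniq1 b' kb' e) cb'.
    move: ne1; rewrite muln1; by case: (ia b') => [|[|]].
  rewrite -big_distrr /=; exact: ar3 sum8 cnt4.
have a0c : a0 != c by apply/eqP => e; rewrite e in a0A; rewrite a0A in cA.
have bB : b \in B by case/and3P: kb.
have b1B : b1 \in B by case/and3P: kb1.
have := L2 HB a0c bB b1B a0b cb a0b1 cb1.
by move=> e; rewrite e ib1 in ib3.
Qed.

Lemma part2 (B : {set {set 'I_18}}) : K34_decomposition B -> 9 <= alpha B.
Proof.
move=> HB; case: (leqP 9 (alpha B)) => // H.
have [w [Hw Hx]] := find_w HB (H : alpha B <= 8).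
by case: (no7 HB Hw Hx).
Qed.

Lemma ar4 a b : a + 2 * b = 51 -> 9 <= a -> 30 <= a + b.
Proof. lia. Qed.

Theorem mainTheorem4 :
  D34_ge 18 30 /\
  (forall B : {set {set 'I_18}}, K34_decomposition B -> 9 <= alpha B).
Proof.
split; last exact: part2.
move=> B HB; exact: ar4 (ab51 HB) (part2 HB).
Qed.
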